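(* Let $P_n$ and $Q_n$ ($n\ge 0$) be the polynomials defined by $P_0(u)=u$, $P_{n+1}(u)=(1+u^2)P_n'(u)$ and $Q_0(u)=1$, $Q_{n+1}(u)=(1+u^2)Q_n'(u)+uQ_n(u)$, so that $\frac{d^n}{dx^n}\tan x=P_n(\tan x)$ and $\frac{d^n}{dx^n}\sec x=\sec x\,Q_n(\tan x)$. For $n\ge1$ let $$W_n(x)=\sum_{\pi\in S_n}x^{\mathrm{pk}(\pi)},\qquad W^{l}_n(x)=\sum_{\pi\in S_n}x^{\mathrm{lpk}(\pi)}.$$ Then for every $n\ge 1$ and every real $u>1$, $$W_n(u)=(u-1)^{\frac{n+1}{2}}u^{-1}P_n\big((u-1)^{-1/2}\big)\quad\text{and}\quad W^{l}_n(u)=(u-1)^{\frac n2}Q_n\big((u-1)^{-1/2}\big).$$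
   Context: $S_n$ is the symmetric group on $[n]=\{1,\dots,n\}$, permutations written $\pi=\pi(1)\cdots\pi(n)$. An interior peak of $\pi$ is an index $i\in\{2,\dots,n-1\}$ with $\pi(i-1)<\pi(i)>\pi(i+1)$; $\mathrm{pk}(\pi)$ is the number of interior peaks. A left peak of $\pi$ is an index $i\in[n-1]$ with $\pi(i-1)<\pi(i)>\pi(i+1)$, where $\pi(0):=0$; $\mathrm{lpk}(\pi)$ is the number of left peaks. Powers of $u-1>0$ denote positive real powers. *)

(* Defs.v *)
From HB Require Import structures.
From mathcomp Require Import all_boot all_order all_algebra all_fingroup.
From mathcomp Require Import reals exp.
Set Implicit Arguments. Unset Strict Implicit. Unset Printing Implicit Defensive.
Import Order.TTheory GRing.Theory Num.Theory.
Local Open Scope ring_scope.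

Fixpoint Ppoly (R : ringType) (n : nat) : {poly R} :=
  match n with
  | 0 => 'X
  | m.+1 => (1 + 'X ^+ 2) * (Ppoly R m)^`()
  end.

Fixpoint Qpoly (R : ringType) (n : nat) : {poly R} :=
  match n with
  | 0 => 1
  | m.+1 => (1 + 'X ^+ 2) * (Qpoly R m)^`() + 'X * Qpoly R m
  end.

(* pval s i = pi(i) with the paper's 1-based conventions: for s : 'S_n,
   pi(i) = (s (i-1)) + 1 for 1 <= i <= n, and pi(0) := 0 (also 0 out of range). *)
Definition pval (n : nat) (s : 'S_n) (i : nat) : nat :=
  match i with
  | 0 => 0
  | i'.+1 => match insub i' : option 'I_n with
             | Some j => (s j).+1
             | None => 0
             end
  end.

Definition is_peak (n : nat) (s : 'S_n) (i : nat) : bool :=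
  (pval s i.-1 < pval s i)%N && (pval s i.+1 < pval s i)%N.

Definition pk (n : nat) (s : 'S_n) : nat := count (is_peak s) (iota 2 (n - 2)).

Definition lpk (n : nat) (s : 'S_n) : nat := count (is_peak s) (iota 1 (n - 1)).

Definition Wpk (R : ringType) (n : nat) (x : R) : R := \sum_(s : 'S_n) x ^+ pk s.
Definition Wlpk (R : ringType) (n : nat) (x : R) : R := \sum_(s : 'S_n) x ^+ lpk s.

(* Main.v *)
Require Import Defs.
From HB Require Import structures.
From mathcomp Require Import all_boot all_order all_algebra all_fingroup.
From mathcomp Require Import reals exp.
From mathcomp Require Import zify ring lra.
Import Order.TTheory GRing.Theory Num.Theory.
Set Implicit Arguments. Unset Strict Implicit. Unset Printing Implicit Defensive.
Local Open Scope ring_scope.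

Local Open Scope nat_scope.

Definition peakb (g : nat -> nat) i := (g i.-1 < g i) && (g i.+1 < g i).
Definition pkc a n g := count (peakb g) (iota a (n - a)).
Definition ins p M (g : nat -> nat) k :=
  if k < p then g k else if k == p then M else g k.-1.

Lemma peak_ins p M g i : 0 < p -> (forall k, g k < M) ->
  peakb (ins p M g) i =
  [|| (i.+1 < p) && peakb g i, i == p | (p.+1 < i) && peakb g i.-1].
Proof.
move=> p0 gM; rewrite /peakb /ins.
have gMf : forall k, (M < g k) = false.
  by move=> k; apply/negbTE; rewrite -leqNgt ltnW.
have : i.+1 < p \/ i.+1 = p \/ i = p \/ i = p.+1 \/ p.+1 < i by lia.
case=> [h|[h|[h|[h|h]]]].
- have -> : i < p by lia. have -> : i.-1 < p by lia.
  have -> : i.+1 < p by lia. have -> : (i == p) = false by lia.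
  have -> : (p.+1 < i) = false by lia. by rewrite /= orbF.
- have -> : i < p by lia. have -> : i.-1 < p by lia.
  have -> : (i.+1 < p) = false by lia. have -> : (i.+1 == p) by lia.
  have -> : (i == p) = false by lia.
  have -> : (p.+1 < i) = false by lia. by rewrite gMf andbF.
- subst i. have -> : p.-1 < p by lia. rewrite ltnn eqxx.
  have -> : (p.+1 < p) = false by lia. have -> : (p.+1 == p) = false by lia.
  by rewrite /= !gM.
- subst i. have -> : (p.+1 < p) = false by lia. rewrite /= ltnn eqxx.
  have -> : (p.+2 < p) = false by lia. have -> : (p.+2 == p) = false by lia.
  have -> : (p.+1 == p) = false by lia. by rewrite gMf ltnn.
- have -> : (i < p) = false by lia. have -> : (i.-1 < p) = false by lia.
  have -> : (i.+1 < p) = false by lia. have -> : (i.+1 == p) = false by lia.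
  have -> : (i == p) = false by lia. have -> : (i.-1 == p) = false by lia.
  have -> : i.-1.+1 = i by lia. by rewrite h /=.
Qed.

Lemma count_or (A B : pred nat) s : (forall x, ~~ (A x && B x)) ->
  count (fun x => A x || B x) s = count A s + count B s.
Proof.
move=> dis; elim: s => //= x s ->; have := dis x.
by case: (A x); case: (B x) => //= _; rewrite addnACA.
Qed.

Lemma count_iota_eq c (P : pred nat) a l :
  count (fun j => (j == c) && P j) (iota a l) = ((a <= c < a + l) && P c).
Proof.
rewrite (eq_count (a2 := fun j => (j == c) && P c)); last by move=> j; case: eqP => // ->.
case: (P c); last first.
  by rewrite andbF (eq_count (a2 := pred0)) ?count_pred0 // => j; rewrite andbF.
rewrite andbT (eq_count (a2 := pred1 c)) ?count_uniq_mem ?iota_uniq ?mem_iota //.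
by move=> j; rewrite andbT.
Qed.

Lemma count_iota_ext (P : pred nat) a m :
  count P (iota a (m.+1 - a)) = count P (iota a (m - a)) + ((a <= m) && P m).
Proof.
case: (leqP a m) => h.
  have -> : m.+1 - a = (m - a) + 1 by lia.
  rewrite iotaD count_cat /=; have -> : a + (m - a) = m by lia.
  by rewrite addn0.
have -> : m.+1 - a = m - a by lia. by rewrite addn0.
Qed.

Lemma count_iota_first (P : pred nat) b m :
  count P (iota b (m - b)) = ((b < m) && P b) + count P (iota b.+1 (m - b.+1)).
Proof.
case: (ltnP b m) => h.
  by have -> : m - b = (m - b.+1).+1 by lia; rewrite h.
have -> : m - b = 0 by lia. have -> : m - b.+1 = 0 by lia.
by [].
Qed.

Lemma count_iota_shift (P : pred nat) a l :
  count P (iota a.+1 l) = count (fun j => P j.+1) (iota a l).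
Proof. by elim: l a => //= l IH a; rewrite IH. Qed.

Lemma count_decomp (P : pred nat) p s : 0 < p ->
  count P s = count (fun i => (i.+1 < p) && P i) s + count (fun i => (p < i) && P i) s
    + count (fun i => (i == p.-1) && P i) s + count (fun i => (i == p) && P i) s.
Proof.
move=> p0; elim: s => //= x s ->.
case: (P x); rewrite ?andbF ?andbT /=; last by lia.
have : x.+1 < p \/ x = p.-1 \/ x = p \/ p < x by lia.
case=> [h|[h|[h|h]]].
- have -> : (p < x) = false by lia. have -> : (x == p.-1) = false by lia.
  have -> : (x == p) = false by lia. rewrite h /=; lia.
- have -> : (p < x) = false by lia. have -> : (x == p.-1) by lia.
  have -> : (x == p) = false by lia. have -> : (x.+1 < p) = false by lia. 
  rewrite /=; lia.
- have -> : (p < x) = false by lia. have -> : (x == p.-1) = false by lia.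
  have -> : (x == p) by lia. have -> : (x.+1 < p) = false by lia. 
  rewrite /=; lia.
- have -> : (p < x) by lia. have -> : (x == p.-1) = false by lia.
  have -> : (x == p) = false by lia. have -> : (x.+1 < p) = false by lia. 
  rewrite /=; lia.
Qed.

Lemma pkc_ins a m p M g : 0 < a <= 2 -> 0 < p <= m.+1 -> (forall k, g k < M) ->
  pkc a m.+1 (ins p M g)
    + (((a <= p.-1 < m) && peakb g p.-1) + ((a <= p < m) && peakb g p))
  = pkc a m g + (a <= p <= m).
Proof.
move=> ha hp gM; have p0 : 0 < p by lia.
rewrite /pkc (eq_count (fun i => peak_ins i p0 gM)).
rewrite count_or; last first.
  move=> x; apply/negP; case/andP=> /andP [h1 _]; case/orP; [lia|].
  by case/andP=> h2 _; lia.
rewrite count_or; last first.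
  by move=> x; apply/negP; case/andP=> /eqP -> /andP [h _]; lia.
rewrite count_iota_ext.
have -> : (a <= m) && ((m.+1 < p) && peakb g m) = false by lia.
rewrite addn0.
rewrite (eq_count (a1 := fun i => i == p) (a2 := fun i => (i == p) && true));
  last by move=> x; rewrite andbT.
rewrite count_iota_eq andbT.
case: a ha => [//|a'] ha.
have hC : count (fun x => (p.+1 < x) && peakb g x.-1) (iota a'.+1 (m - a'))
   = count (fun j => (p < j) && peakb g j) (iota a'.+1 (m - a'.+1)).
  rewrite count_iota_shift.
  rewrite (eq_count (a1 := fun j => (p.+1 < j.+1) && peakb g j.+1.-1)
    (a2 := fun j => (p < j) && peakb g j)); last by [].
  rewrite count_iota_first.
  have -> : (a' < m) && ((p < a') && peakb g a') = false by lia.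
  by rewrite add0n.
rewrite hC.
rewrite [count (peakb g) _](count_decomp _ _ p0) !count_iota_eq.
have -> : (a'.+1 <= p < a'.+1 + (m - a')) = (a'.+1 <= p <= m) by lia.
have -> : (a'.+1 <= p.-1 < a'.+1 + (m - a'.+1)) = (a'.+1 <= p.-1 < m) by lia.
have -> : (a'.+1 <= p < a'.+1 + (m - a'.+1)) = (a'.+1 <= p < m) by lia.
lia.
Qed.

Lemma sum_count (F : pred nat) s : \sum_(i <- s) (F i : nat) = count F s.
Proof. by elim: s => [|x s IH]; rewrite ?big_nil ?big_cons ?IH. Qed.

Lemma count_range (P : pred nat) a b N :
  count (fun i => (a <= i < b) && P i) (iota 0 N) = count P (iota a (minn N b - a)).
Proof.
elim: N => [|N IH]; first by rewrite min0n.
rewrite -addn1 iotaD count_cat IH /= addn0 addn1.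
case: (ltnP N b) => hNb.
  have -> : minn N.+1 b = N.+1 by lia.
  have e : minn N b = N by lia.
  by rewrite ?e count_iota_ext add0n andbT.
have -> : minn N.+1 b = b by lia. by rewrite andbF /= addn0.
Qed.

Lemma sum_ord_count (F : pred nat) N : \sum_(i < N) (F i : nat) = count F (iota 0 N).
Proof. by rewrite -(big_mkord xpredT (fun i => (F i : nat))) /index_iota subn0 sum_count. Qed.

Lemma peak_adj g p : 0 < p -> ~~ (peakb g p.-1 && peakb g p).
Proof.
move=> p0; rewrite /peakb; have -> : p.-1.+1 = p by lia.
apply/negP; case/andP=> /andP [_ h1] /andP [h2 _]; lia.
Qed.

Local Close Scope nat_scope.
Local Open Scope ring_scope.

Lemma slot_sum (R : comNzRingType) (x : R) a m g : (0 < a <= 2)%N ->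
  (a <= m.+1)%N -> (forall k, g k < m.+1)%N ->
  \sum_(i < m.+1) x ^+ pkc a m.+1 (ins i.+1 m.+1 g)
  = a%:R * x ^+ pkc a m g + (m.+1 - a)%:R * x ^+ (pkc a m g).+1
    + (2 * pkc a m g)%:R * (x ^+ pkc a m g - x ^+ (pkc a m g).+1).
Proof.
move=> ha ham gM; set k := pkc a m g.
pose I (i : nat) := ((a <= i.+1 <= m)%N : nat).
pose E (i : nat) := (((a <= i < m)%N && peakb g i : nat)
   + ((a <= i.+1 < m)%N && peakb g i.+1))%N.
have hk i : (i < m.+1)%N ->
    pkc a m.+1 (ins i.+1 m.+1 g) = (k + (I i - E i))%N /\ (E i <= I i)%N.
  move=> hi; have := pkc_ins (m := m) (p := i.+1) ha _ gM; rewrite -/k /= => h.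
  have := h (ltac:(lia)); clear h; have := peak_adj g (ltn0Sn i); rewrite /= /I /E.
  case: (peakb g i); case: (peakb g i.+1) => //=; rewrite ?andbT ?andbF; lia.
have step i : (i < m.+1)%N -> x ^+ pkc a m.+1 (ins i.+1 m.+1 g) =
    x ^+ k + (I i)%:R * (x ^+ k.+1 - x ^+ k) - (E i)%:R * (x ^+ k.+1 - x ^+ k).
  move=> hi; have [-> hle] := hk i hi.
  rewrite -addrA -mulrBl -natrB //.
  have : (I i - E i <= 1)%N by rewrite /I; case: (_ <= _ <= _)%N; lia.
  case: (I i - E i)%N => [|[|//]] _.
    by rewrite addn0 mul0r addr0.
  by rewrite addn1 mul1r addrC subrK.
rewrite (eq_bigr _ (fun (i : 'I_m.+1) _ => step i (ltn_ord i))).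
rewrite sumrB big_split /= sumr_const card_ord -!mulr_suml -!natr_sum.
have sI : (\sum_(i < m.+1) I i = m.+1 - a)%N.
  rewrite (eq_bigr (fun i : 'I_m.+1 => ((a.-1 <= i < m)%N && predT i : nat))); last first.
    by move=> i _; rewrite /I andbT; congr nat_of_bool; lia.
  rewrite (sum_ord_count (fun i => (a.-1 <= i < m)%N && predT i)) count_range count_predT size_iota.
  lia.
have sG : forall N, (m <= N)%N ->
    (\sum_(i < N) ((a <= i < m)%N && peakb g i : nat) = k)%N.
  move=> N hN.
  rewrite (sum_ord_count (fun i => (a <= i < m)%N && peakb g i)) count_range.
  by have -> : minn N m = m by lia.
have sE : (\sum_(i < m.+1) E i = 2 * k)%N.
  rewrite big_split /= sG //.
  have := sG (m.+2)%N (leqW (leqnSn m)); rewrite big_ord_recl /=.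
  have -> : (a <= 0)%N = false by lia. rewrite add0n => ->. lia.
rewrite sI sE natrB; last by lia.
rewrite exprS; ring.
Qed.

Lemma sum_Sn_lift (V : nmodType) n (F : 'S_n.+1 -> V) :
  \sum_(s : 'S_n.+1) F s = \sum_(i : 'I_n.+1) \sum_(s : 'S_n) F (lift_perm i ord_max s).
Proof.
rewrite (partition_big (fun s : 'S_n.+1 => s^-1%g ord_max) predT) //=.
apply: eq_bigr => i0 _.
rewrite (eq_bigl (fun s : 'S_n.+1 => s i0 == ord_max)); last first.
  move=> s; apply/eqP/eqP => [<-|<-]; by rewrite ?permKV ?permK.
set j0 : 'I_n.+1 := ord_max.
rewrite (reindex (lift_perm i0 j0)); last first.
  pose ulsf i (s : 'S_n.+1) k := odflt k (unlift (s i) (s (lift i k))).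
  have ulsfK i (s : 'S_n.+1) k: lift (s i) (ulsf i s k) = s (lift i k).
    rewrite /ulsf; have:= neq_lift i k.
    by rewrite -(can_eq (permK s)) => /unlift_some[] ? ? ->.
  have inj_ulsf: injective (ulsf i0 _).
    move=> s; apply: can_inj (ulsf (s i0) s^-1%g) _ => k'.
    by rewrite {1}/ulsf ulsfK !permK liftK.
  exists (fun s => perm (inj_ulsf s)) => [s _ | s].
    by apply/permP=> k'; rewrite permE /ulsf lift_perm_lift lift_perm_id liftK.
  move/(s _ =P _) => si0; apply/permP=> k.
  case: (unliftP i0 k) => [k'|] ->; rewrite ?lift_perm_id //.
  by rewrite lift_perm_lift -si0 permE ulsfK.
by apply: eq_bigl => s; rewrite lift_perm_id eqxx.
Qed.

Notation pv := Defs.pval.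

Lemma pval_ord n (s : 'S_n) (j : 'I_n) : (pv s (val j).+1 = (s j).+1)%N.
Proof. by rewrite /Defs.pval valK. Qed.

Lemma pval_lt n (s : 'S_n) k : (pv s k < n.+1)%N.
Proof.
case: k => [|k] //=; case: insubP => [j _ _|_] //.
by rewrite ltnS ltn_ord.
Qed.

Lemma pval_big n (s : 'S_n) k : (n <= k)%N -> (pv s k.+1 = 0)%N.
Proof. by move=> hk; rewrite /= insubN // -leqNgt. Qed.

Lemma pval_lift n (i : 'I_n.+1) (s : 'S_n) k :
  (pv (lift_perm i ord_max s) k = ins i.+1 n.+1 (pv s) k)%N.
Proof.
rewrite /ins; case: k => [|k]; first by [].
rewrite [pv (lift_perm _ _ _) _]/Defs.pval.
case: insubP => [j hk hj|hk].
  case: (unliftP i j) => [j'|] hji; rewrite hji in hj *.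
    rewrite lift_perm_lift /= /bump leqNgt ltn_ord add0n.
    move: hj; rewrite /= /bump; case: (leqP i j') => hij hj; subst k.
      have -> : (j'.+2 < i.+1 = false)%N by lia.
      have -> : (j'.+2 == i.+1 = false)%N by lia.
      by rewrite -(pval_ord s j').
    have -> : (j'.+1 < i.+1)%N by lia.
    by rewrite -(pval_ord s j').
  rewrite lift_perm_id /=; subst k; rewrite ltnn eqxx //.
rewrite ltnNge in hk; have hk' : (n.+1 <= k)%N by lia.
have -> : (k.+1 < i.+1)%N = false by have := ltn_ord i; lia.
have -> : (k.+1 == i.+1 = false)%N by have := ltn_ord i; lia.
case: k hk hk' => [|k] // _ hk'. by rewrite pval_big.
Qed.

Lemma pkc_ext a n g1 g2 : (forall k, g1 k = g2 k) -> pkc a n g1 = pkc a n g2.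
Proof. by move=> e; apply: eq_count => i; rewrite /peakb !e. Qed.

Definition Wp (R : comNzRingType) a n : {poly R} := \sum_(s : 'S_n) 'X^(pkc a n (pv s)).

Lemma deriv_sum (R : comNzRingType) (I : Type) (r : seq I) (P : pred I) (F : I -> {poly R}) :
  (\sum_(i <- r | P i) F i)^`() = \sum_(i <- r | P i) (F i)^`().
Proof. exact: (big_morph _ (@derivD R) (deriv0 R)). Qed.

Lemma Wp_rec (R : comNzRingType) a m : (0 < a <= 2)%N -> (a <= m.+1)%N ->
  Wp R a m.+1 = (a%:R + (m.+1 - a)%:R * 'X) * Wp R a m
                + 2%:R * 'X * (1 - 'X) * (Wp R a m)^`().
Proof.
move=> ha ham.
rewrite /Wp sum_Sn_lift exchange_big /= deriv_sum !mulr_sumr -big_split /=.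
apply: eq_bigr => s _.
rewrite (eq_bigr (fun i : 'I_m.+1 => 'X^(pkc a m.+1 (ins i.+1 m.+1 (pv s))))); last first.
  by move=> i _; rewrite (pkc_ext _ _ (pval_lift i s)).
rewrite slot_sum //; last exact: pval_lt.
move: (m.+1 - a)%N => c; set k := pkc a m (pv s).
rewrite derivXn natrM; case: k => [|k].
  rewrite mulr0n mulr0 mulr0 !addr0 mul0r addr0 expr0 expr1.
  move: ('X : {poly R}) => X; ring.
rewrite -mulr_natr.
have -> : (k.+1.-1 = k)%N by [].
rewrite !exprS; move: ('X : {poly R}) => X; ring.
Qed.

Local Open Scope ring_scope.

Definition revp (R : nzRingType) N (p : {poly R}) : {poly R} :=
  \poly_(i < N.+1) p`_(N - i).

Section Rev.
Variable R : comNzRingType.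
Implicit Types p q : {poly R}.

Lemma revpD N p q : revp N (p + q) = revp N p + revp N q.
Proof.
by apply/polyP => j; rewrite coefD !coef_poly; case: ltnP => _; rewrite ?coefD ?addr0.
Qed.

Lemma revpZ N c p : revp N (c *: p) = c *: revp N p.
Proof.
by apply/polyP => j; rewrite coefZ !coef_poly; case: ltnP => _; rewrite ?coefZ ?mulr0.
Qed.

Lemma revp0 N : revp N (0 : {poly R}) = 0.
Proof. by have := revpZ N 0 0; rewrite !scale0r. Qed.

Lemma revpMn N p k : revp N (p *+ k) = revp N p *+ k.
Proof. by rewrite -!scaler_nat revpZ. Qed.

Lemma revpXn N j : (j <= N)%N -> revp N 'X^j = 'X^(N - j) :> {poly R}.
Proof.
move=> hj; apply/polyP => k; rewrite coef_poly !coefXn.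
case: ltnP => hk.
  congr (_%:R); apply/eqP/eqP; lia.
by have -> : (k == N - j)%N = false by lia.
Qed.

Lemma lin_sum (f : {poly R} -> {poly R}) n (c : nat -> R) (q : nat -> {poly R}) :
  (forall p q, f (p + q) = f p + f q) -> (forall a p, f (a *: p) = a *: f p) ->
  f (\sum_(i < n) c i *: q i) = \sum_(i < n) c i *: f (q i).
Proof.
move=> fD fZ; have f0 : f 0 = 0 by have := fZ 0 0; rewrite !scale0r.
rewrite (big_morph f fD f0); apply: eq_bigr => i _; exact: fZ.
Qed.

Lemma poly_decomp N p : (size p <= N.+1)%N -> p = \sum_(i < N.+1) p`_i *: 'X^i.
Proof.
move=> hs; rewrite -poly_def; apply/polyP => j; rewrite coef_poly.
by case: ltnP => // h; rewrite nth_default //; apply: leq_trans hs h.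
Qed.

Lemma revp_decomp N p : (size p <= N.+1)%N ->
  revp N p = \sum_(i < N.+1) p`_i *: 'X^(N - i).
Proof.
move=> hs; rewrite {1}(poly_decomp hs) (@lin_sum (revp N) _ _ _ (revpD N) (revpZ N)).
by apply: eq_bigr => i _; rewrite revpXn // -ltnS.
Qed.

Definition psiP N p := revp N.+1 ((1 + 'X^2) * p^`()).
Definition phiP N q := (1 + 'X^2) * (N%:R *: q - 'X * q^`()).
Definition psiQ N p := revp N.+1 ((1 + 'X^2) * p^`() + 'X * p).
Definition phiQ N q := (1 + 'X^2) * (N%:R *: q - 'X * q^`()) + q.

Lemma monoP i k : psiP (i + k) 'X^i = phiP (i + k) 'X^k.
Proof.
rewrite /psiP /phiP !derivXn.
case: i => [|i].
  rewrite mulr0n mulr0 revp0 add0n.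
  case: k => [|k]; first by rewrite mulr0n mulr0 subr0 scale0r mulr0.
  by rewrite scaler_nat /= mulrnAr -exprS subrr mulr0.
rewrite mulrnAr mulrDl mul1r -exprD add2n /= mulrnDl revpD !revpMn.
rewrite !revpXn; try lia.
have -> : ((i.+1 + k).+1 - i = k.+2)%N by lia.
have -> : ((i.+1 + k).+1 - i.+2 = k)%N by lia.
have -> : 'X * ('X^(k.-1) *+ k) = 'X^k *+ k :> {poly R}.
  by case: k => [|k] /=; rewrite ?mulr0n ?mulr0 // mulrnAr -exprS.
rewrite scaler_nat -mulrnBr; last by lia.
have -> : (i.+1 + k - k = i.+1)%N by lia.
rewrite mulrnAr mulrDl mul1r -exprD add2n.
by rewrite mulrnDl addrC.
Qed.

Lemma monoQ i k : psiQ (i + k) 'X^i = phiQ (i + k) 'X^k.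
Proof.
rewrite /psiQ /phiQ revpD -exprS revpXn; last by lia.
have -> : ((i + k).+1 - i.+1 = k)%N by lia.
congr (_ + _); exact: monoP.
Qed.

Lemma keyP N p : (size p <= N.+1)%N -> psiP N p = phiP N (revp N p).
Proof.
move=> hs; rewrite (revp_decomp hs) {1}(poly_decomp hs).
have psiD : forall p q, psiP N (p + q) = psiP N p + psiP N q.
  by move=> p1 q1; rewrite /psiP derivD mulrDr revpD.
have psiZ : forall a p, psiP N (a *: p) = a *: psiP N p.
  by move=> a p1; rewrite /psiP derivZ -scalerAr revpZ.
have phiD : forall p q, phiP N (p + q) = phiP N p + phiP N q.
  by move=> p1 q1; rewrite /phiP derivD -!mul_polyC; ring.
have phiZ : forall a p, phiP N (a *: p) = a *: phiP N p.
  by move=> a p1; rewrite /phiP derivZ -!mul_polyC; ring.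
rewrite (@lin_sum (psiP N) _ _ _ psiD psiZ) (@lin_sum (phiP N) _ _ (fun j => 'X^(N - j)) phiD phiZ).
apply: eq_bigr => i _.
have hi : (i <= N)%N by rewrite -ltnS.
by have := monoP i (N - i); rewrite subnKC // => ->.
Qed.

Lemma keyQ N p : (size p <= N.+1)%N -> psiQ N p = phiQ N (revp N p).
Proof.
move=> hs; rewrite (revp_decomp hs) {1}(poly_decomp hs).
have psiD : forall p q, psiQ N (p + q) = psiQ N p + psiQ N q.
  by move=> p1 q1; rewrite /psiQ -revpD derivD; congr revp; ring.
have psiZ : forall a p, psiQ N (a *: p) = a *: psiQ N p.
  by move=> a p1; rewrite /psiQ -revpZ derivZ -!mul_polyC; congr revp; ring.
have phiD : forall p q, phiQ N (p + q) = phiQ N p + phiQ N q.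
  by move=> p1 q1; rewrite /phiQ derivD -!mul_polyC; ring.
have phiZ : forall a p, phiQ N (a *: p) = a *: phiQ N p.
  by move=> a p1; rewrite /phiQ derivZ -!mul_polyC; ring.
rewrite (@lin_sum (psiQ N) _ _ _ psiD psiZ) (@lin_sum (phiQ N) _ _ (fun j => 'X^(N - j)) phiD phiZ).
apply: eq_bigr => i _.
have hi : (i <= N)%N by rewrite -ltnS.
by have := monoQ i (N - i); rewrite subnKC // => ->.
Qed.

End Rev.

Section PQ.
Variable R : comNzRingType.

Lemma size_deriv_le (p : {poly R}) : (size p^`() <= (size p).-1)%N.
Proof.
have [->|nz] := eqVneq p 0; first by rewrite deriv0 size_poly0.
have := lt_size_deriv nz; lia.
Qed.

Lemma size_1X2 : (size ((1 + 'X^2)%R : {poly R}) <= 3)%N.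
Proof.
apply: leq_trans (size_polyD _ _) _; rewrite size_poly1 size_polyXn //.
Qed.

Lemma size_Ppoly n : (size (Ppoly R n) <= n.+2)%N.
Proof.
elim: n => [|n IH] /=; first by rewrite size_polyX.
apply: leq_trans (size_polyMleq _ _) _.
have := size_1X2; have := size_deriv_le (Ppoly R n). move: (size (Ppoly R n)^`()) (size (Ppoly R n)) IH => a b IH h1. move: (size _) => c h2. lia.
Qed.

Lemma size_Qpoly n : (size (Qpoly R n) <= n.+1)%N.
Proof.
elim: n => [|n IH] /=; first by rewrite size_poly1.
apply: leq_trans (size_polyD _ _) _; rewrite geq_max; apply/andP; split.
  apply: leq_trans (size_polyMleq _ _) _.
  have := size_1X2; have := size_deriv_le (Qpoly R n). move: (size (Qpoly R n)^`()) (size (Qpoly R n)) IH => a b IH h1. move: (size _) => c h2. lia.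
apply: leq_trans (size_polyMleq _ _) _; rewrite size_polyX. move: (size (Qpoly R n)) IH => b IH. lia.
Qed.

Lemma Wp1 a : (0 < a)%N -> Wp R a 1 = 1.
Proof.
move=> a0; rewrite /Wp (eq_bigr (fun _ => 1)); last first.
  by move=> s _; rewrite /pkc; have -> : (1 - a = 0)%N by lia.
by rewrite sumr_const card_Sn.
Qed.

Lemma comp_natr n (q : {poly R}) : (n%:R \Po q) = n%:R.
Proof. by rewrite -polyC_natr comp_polyC. Qed.

Lemma comp_polyNN (p q : {poly R}) : (- p) \Po q = - (p \Po q).
Proof. by rewrite -sub0r comp_polyB -polyC0 comp_polyC polyC0 sub0r. Qed.

Lemma comp1 (q : {poly R}) : (1 \Po q) = 1.
Proof. by rewrite -polyC1 comp_polyC. Qed.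

Lemma deriv_y : (1 + 'X^2 : {poly R})^`() = 2%:R * 'X.
Proof. by rewrite derivD -polyC1 derivC derivXn add0r /= mulr_natl. Qed.

Lemma RP n : (1 <= n)%N ->
  revp n.+1 (Ppoly R n) = (1 + 'X^2) * (Wp R 2 n \Po (1 + 'X^2)).
Proof.
elim: n => [//|n IH] _; case: n IH => [|n] IH.
  rewrite Wp1 // comp1 mulr1 /= derivX mulr1 revpD.
  have h : revp 2 ('X^0 : {poly R}) = 'X^(2 - 0) by rewrite revpXn. rewrite expr0 in h.
  by rewrite h revpXn // subnn subn0 expr0 addrC.
have -> : revp n.+3 (Ppoly R n.+2) = psiP n.+2 (Ppoly R n.+1) by [].
rewrite keyP ?size_Ppoly // IH // /phiP (@Wp_rec R 2 n.+1) //.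
have -> : (n.+2 - 2 = n)%N by lia.
rewrite !(comp_polyD, comp_polyM, comp_polyB, comp_polyNN, comp_polyX, comp_natr, comp1).
rewrite derivM deriv_comp deriv_y -!mul_polyC polyC_natr.
move: (Wp R 2 n.+1 \Po (1 + 'X^2) : {poly R}) ((Wp R 2 n.+1)^`() \Po (1 + 'X^2) : {poly R}) => A B.
move: ('X : {poly R}) => X.
ring.
Qed.

Lemma LQ n : (1 <= n)%N ->
  revp n (Qpoly R n) = Wp R 1 n \Po (1 + 'X^2).
Proof.
elim: n => [//|n IH] _; case: n IH => [|n] IH.
  rewrite Wp1 // comp1 /= -polyC1 derivC mulr0 add0r polyC1 mulr1.
  have h : revp 1 ('X^1 : {poly R}) = 'X^(1 - 1) by rewrite revpXn.
  by rewrite expr1 in h; rewrite h subnn expr0.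
have -> : revp n.+2 (Qpoly R n.+2) = psiQ n.+1 (Qpoly R n.+1) by [].
rewrite keyQ ?size_Qpoly // IH // /phiQ (@Wp_rec R 1 n.+1) //.
have -> : (n.+2 - 1 = n.+1)%N by lia.
rewrite !(comp_polyD, comp_polyM, comp_polyB, comp_polyNN, comp_polyX, comp_natr, comp1).
rewrite deriv_comp deriv_y -!mul_polyC polyC_natr.
move: (Wp R 1 n.+1 \Po (1 + 'X^2) : {poly R}) ((Wp R 1 n.+1)^`() \Po (1 + 'X^2) : {poly R}) => A B.
move: ('X : {poly R}) => X.
ring.
Qed.

End PQ.

Local Open Scope ring_scope.

Lemma horner_revp (F : fieldType) N (p : {poly F}) s :
  (size p <= N.+1)%N -> s != 0 -> (revp N p).[s] = s ^+ N * p.[s^-1].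
Proof.
move=> hs s0; rewrite /revp horner_poly (horner_coef_wide _ hs) mulr_sumr.
rewrite (reindex_inj rev_ord_inj) /=; apply: eq_bigr => i _.
have hi : (i <= N)%N by rewrite -ltnS.
rewrite subKn // exprVn.
have -> : s ^+ N = s ^+ (N - i) * s ^+ i by rewrite -exprD subnK.
have si : s ^+ i != 0 by exact: expf_neq0.
rewrite subSS; field; exact: si.
Qed.

Theorem mainTheorem2 (R : realType) (n : nat) (u : R) :
  (1 <= n)%N -> 1 < u ->
  Wpk n u = (u - 1) `^ ((n.+1)%:R / 2) * u^-1 * (Ppoly R n).[(u - 1) `^ (- 2^-1)]
  /\ Wlpk n u = (u - 1) `^ (n%:R / 2) * (Qpoly R n).[(u - 1) `^ (- 2^-1)].
Proof.
move=> hn hu.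
have hu0 : 0 < u - 1 by rewrite subr_gt0.
set s := (u - 1) `^ 2^-1.
have s0 : 0 < s by rewrite /s powR_gt0.
have sinv : (u - 1) `^ (- 2^-1) = s^-1 by rewrite powRN.
have pw k : (u - 1) `^ (k%:R / 2) = s ^+ k.
  by rewrite /s -powR_mulrn ?ltW // -powRrM mulrC.
have s2 : 1 + s ^+ 2 = u.
  by rewrite -pw divff ?pnatr_eq0 // powRr1 ?ltW //; ring.
have u0 : u != 0 by apply: lt0r_neq0; lra.
have sn0 : s != 0 by apply: lt0r_neq0.
rewrite sinv !pw; split.
  have h := congr1 (horner^~ s) (RP R hn).
  rewrite horner_revp ?size_Ppoly // in h.
  rewrite hornerM horner_comp !hornerE s2 in h.
  have -> : Wpk n u = (Wp R 2 n).[u].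
    by rewrite /Wpk /Wp horner_sum; apply: eq_bigr => t _; rewrite hornerXn.
  apply: (mulfI u0); rewrite -h. field.
  exact: u0.
have h := congr1 (horner^~ s) (LQ R hn).
rewrite horner_revp ?size_Qpoly // in h.
rewrite horner_comp !hornerE s2 in h.
rewrite h /Wlpk /Wp horner_sum; apply: eq_bigr => t _; rewrite hornerXn.
by [].
Qed.
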